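(* Fix $\rho>0$. There exists a constant $C=C(\rho)$ such that for all positive integers $K,L$, letting $\tilde I\subset\mathbb{Z}$ be an interval of $M=LK$ consecutive sites written as the union of $L$ disjoint intervals $I_1,\dots,I_L$ of $K$ consecutive sites each, with $\mathcal{M}_j=\sigma\big(\sum_{x\in I_j}\eta(x)\big)$ and $\tilde{\mathcal{M}}=\sigma\big(\sum_{x\in\tilde I}\eta(x)\big)$, the random variable $$V_2(\eta)=\sum_{j=1}^{L}E_{\nu_\rho}\Big(\sum_{x\in I_j}V_g(\eta(x))\,\Big|\,\mathcal{M}_j\Big)-E_{\nu_\rho}\Big(\sum_{x\in\tilde I}V_g(\eta(x))\,\Big|\,\tilde{\mathcal{M}}\Big)$$ satisfies $\mathrm{Var}(V_2,\nu_\rho)\le CL$.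
   Context: $g(k)=1_{\{k\ge1\}}$ for $k\in\mathbb{N}=\{0,1,2,\dots\}$. $\nu_\rho$ is the product measure on $\mathbb{N}^{\mathbb{Z}}$ with geometric marginals $\nu_\rho(\eta(x)=k)=\frac{1}{1+\rho}\big(\frac{\rho}{1+\rho}\big)^k$, $k\ge0$ (mean $\rho$). $\phi(\rho)=E_{\nu_\rho}[g(\eta(0))]=\frac{\rho}{1+\rho}$ and $V_g(\eta(x))=g(\eta(x))-\phi(\rho)-\phi'(\rho)[\eta(x)-\rho]$. *)

(* Defs.v *)
From Stdlib Require Import Reals Lra ZArith.
Open Scope R_scope.

(** Geometric marginal of nu_rho: P(eta(x)=k) = 1/(1+rho) (rho/(1+rho))^k. *)
Definition geom (rho : R) (k : nat) : R := (1 / (1 + rho)) * (rho / (1 + rho)) ^ k.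

Definition g (k : nat) : R := match k with O => 0 | S _ => 1 end.

(** phi(rho) = E_{nu_rho}[g] = rho/(1+rho), and its derivative. *)
Definition phi (rho : R) : R := rho / (1 + rho).
Definition phi' (rho : R) : R := 1 / (1 + rho) ^ 2.

Lemma phi_as_fct : phi = (id / (fct_cte 1 + id))%F.
Proof. reflexivity. Qed.

Lemma phi'_is_derivative (rho : R) : 0 <= rho -> derivable_pt_lim phi rho (phi' rho).
Proof.
  intros Hr.
  assert (H1 : 1 + rho <> 0) by lra.
  assert (E : phi = (id / (fct_cte 1 + id))%F).
  { exact phi_as_fct. }
  rewrite E; unfold phi'.
  replace (1 / (1 + rho) ^ 2) with ((1 * (fct_cte 1 + id)%F rho - (0 + 1) * id rho) / Rsqr ((fct_cte 1 + id)%F rho))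
    by (unfold fct_cte, id, plus_fct, Rsqr; simpl; field; auto).
  apply derivable_pt_lim_div.
  - apply derivable_pt_lim_id.
  - apply derivable_pt_lim_plus; [apply derivable_pt_lim_const | apply derivable_pt_lim_id].
  - unfold fct_cte, id, plus_fct; exact H1.
Qed.

Definition Vg (rho : R) (k : nat) : R := g k - phi rho - phi' rho * (INR k - rho).

Definition upd (eta : Z -> nat) (a : Z) (k : nat) : Z -> nat :=
  fun x => if Z.eq_dec x a then k else eta x.

Definition zero_conf : Z -> nat := fun _ => O.

Fixpoint wsum (rho : R) (N : nat) (a : Z) (n : nat) (F : (Z -> nat) -> R)
  (eta : Z -> nat) : R :=
  match n with
  | O => F eta
  | S m => sum_f_R0 (fun k => geom rho k * wsum rho N (a + 1)%Z m F (upd eta a k)) N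
  end.

(** Truncated nu_rho-expectation of F (depending only on sites a..a+n-1) over
    the box {0..N}^{[a,a+n)}.  As N -> infinity this converges to E_{nu_rho}[F]
    for integrable F, and for F >= 0 it increases to E_{nu_rho}[F]. *)
Definition box_exp (rho : R) (N : nat) (a : Z) (n : nat) (F : (Z -> nat) -> R) : R :=
  wsum rho N a n F zero_conf.

Fixpoint blocksum (eta : Z -> nat) (a : Z) (n : nat) : nat :=
  match n with O => O | S m => (eta a + blocksum eta (a + 1)%Z m)%nat end.

Fixpoint sumVg (rho : R) (eta : Z -> nat) (a : Z) (n : nat) : R :=
  match n with O => 0 | S m => Vg rho (eta a) + sumVg rho eta (a + 1)%Z m end.

(** Conditional expectation E_{nu_rho}(f | sigma(sum_{x in [a,a+n)} eta(x)))
    for f depending only on the sites of the block [a,a+n): on the event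
    {sum = s} it equals E[f 1_{sum=s}] / nu_rho(sum = s); only configurations
    with values <= s contribute, so the sums are finite. *)
Definition condE (rho : R) (a : Z) (n : nat) (f : (Z -> nat) -> R) (eta : Z -> nat) : R :=
  let s := blocksum eta a n in
  box_exp rho s a n (fun xi => if Nat.eqb (blocksum xi a n) s then f xi else 0)
  / box_exp rho s a n (fun xi => if Nat.eqb (blocksum xi a n) s then 1 else 0).

Fixpoint rsum (f : nat -> R) (n : nat) : R :=
  match n with O => 0 | S m => rsum f m + f m end.

(** V_2 for tilde I = [a, a+LK), I_j = [a+(j-1)K, a+jK), j = 1..L. *)
Definition V2 (rho : R) (a : Z) (K L : nat) (eta : Z -> nat) : R :=
  rsum (fun j =>
          let b := (a + Z.of_nat (j * K))%Z in
          condE rho b K (fun xi => sumVg rho xi b K) eta) L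
  - condE rho a (L * K) (fun xi => sumVg rho xi a (L * K)) eta.

(* Main.v *)
Require Import Defs.
From Stdlib Require Import Reals Lra Lia ZArith.
Open Scope R_scope.


Lemma geom_nonneg rho k : 0 <= rho -> 0 <= geom rho k.
Proof.
  intros H. unfold geom. apply Rmult_le_pos.
  - apply Rmult_le_pos; [lra| left; apply Rinv_0_lt_compat; lra].
  - apply pow_le. apply Rmult_le_pos; [lra| left; apply Rinv_0_lt_compat; lra].
Qed.

Lemma wsum_ext_local rho N n : forall a F F' eta,
  (forall xi, (forall x, (x < a \/ a + Z.of_nat n <= x)%Z -> xi x = eta x) -> F xi = F' xi) ->
  wsum rho N a n F eta = wsum rho N a n F' eta.
Proof.
  induction n as [|m IH]; intros a F F' eta H; simpl.
  - apply H; auto.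
  - apply sum_eq; intros k _. f_equal. apply IH.
    intros xi Hxi. apply H. intros x Hx.
    destruct (Z.eq_dec x a) as [->|Hne].
    + exfalso. destruct Hx; lia.
    + rewrite Hxi by lia. unfold upd. destruct (Z.eq_dec x a); [contradiction|reflexivity].
Qed.

Lemma wsum_ext rho N n a F F' eta : (forall xi, F xi = F' xi) ->
  wsum rho N a n F eta = wsum rho N a n F' eta.
Proof. intros H; apply wsum_ext_local; auto. Qed.

Lemma wsum_le rho N n : 0 <= rho -> forall a F F' eta,
  (forall xi, F xi <= F' xi) -> wsum rho N a n F eta <= wsum rho N a n F' eta.
Proof.
  intros Hr; induction n as [|m IH]; intros a F F' eta H; simpl; auto.
  apply sum_Rle; intros k _. apply Rmult_le_compat_l; [apply geom_nonneg; auto|]. apply IH; auto.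
Qed.

Lemma wsum_plus rho N n : forall a F G eta,
  wsum rho N a n (fun xi => F xi + G xi) eta = wsum rho N a n F eta + wsum rho N a n G eta.
Proof.
  induction n as [|m IH]; intros a F G eta; simpl; auto.
  rewrite <- sum_plus. apply sum_eq; intros k _. rewrite IH. ring.
Qed.

Lemma wsum_scal rho N n : forall a c F eta,
  wsum rho N a n (fun xi => c * F xi) eta = c * wsum rho N a n F eta.
Proof.
  induction n as [|m IH]; intros a c F eta; simpl; auto.
  rewrite scal_sum. apply sum_eq; intros k _. rewrite IH. ring.
Qed.

Definition pM rho N := sum_f_R0 (geom rho) N.

Lemma wsum_const rho N n : forall a c eta,
  wsum rho N a n (fun _ => c) eta = c * pM rho N ^ n.
Proof.
  induction n as [|m IH]; intros a c eta; simpl. ring.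
  transitivity (sum_f_R0 (fun k => geom rho k * (c * pM rho N ^ m)) N).
  apply sum_eq; intros k _; rewrite IH; reflexivity.
  rewrite <- (scal_sum (geom rho) N (c * pM rho N ^ m)). unfold pM. ring.
Qed.

Lemma wsum_mono_N rho N n : 0 <= rho -> forall a F eta, (forall xi, 0 <= F xi) ->
  wsum rho N a n F eta <= wsum rho (S N) a n F eta.
Proof.
  intros Hr; induction n as [|m IH]; intros a F eta HF; simpl. lra.
  apply Rle_trans with (sum_f_R0 (fun k => geom rho k * wsum rho (S N) (a+1) m F (upd eta a k)) N).
  - apply sum_Rle; intros k _. apply Rmult_le_compat_l; [apply geom_nonneg; auto|]. apply IH; auto.
  - assert (0 <= geom rho (S N) * wsum rho (S N) (a + 1) m F (upd eta a (S N))); [|lra].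
    apply Rmult_le_pos; [apply geom_nonneg; auto|].
    apply Rle_trans with (wsum rho (S N) (a+1) m (fun _ => 0) (upd eta a (S N))).
    + rewrite wsum_const. lra.
    + apply wsum_le; auto.
Qed.

Lemma wsum_nonneg rho N n a F eta : 0 <= rho -> (forall xi, 0 <= F xi) -> 0 <= wsum rho N a n F eta.
Proof.
  intros Hr H. apply Rle_trans with (wsum rho N a n (fun _ => 0) eta).
  rewrite wsum_const; lra. apply wsum_le; auto.
Qed.

Lemma wsum_add rho N n1 : forall n2 a F eta,
  wsum rho N a (n1 + n2) F eta = wsum rho N a n1 (fun xi => wsum rho N (a + Z.of_nat n1) n2 F xi) eta.
Proof.
  induction n1 as [|m IH]; intros n2 a F eta; simpl.
  - f_equal. lia.
  - apply sum_eq; intros k _. rewrite IH. f_equal. apply wsum_ext; intros xi. f_equal. lia.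
Qed.

Definition gi (k : nat) : nat := match k with O => O | S _ => 1%nat end.
Fixpoint gcount (eta : Z -> nat) (a : Z) (n : nat) : nat :=
  match n with O => O | S m => (gi (eta a) + gcount eta (a + 1)%Z m)%nat end.

Fixpoint PW (rho : R) (N n : nat) (H : nat -> nat -> R) : R :=
  match n with
  | O => H O O
  | S m => sum_f_R0 (fun k => geom rho k * PW rho N m (fun G t => H (gi k + G)%nat (k + t)%nat)) N
  end.

Lemma PW_ext rho N n : forall H H', (forall G t, H G t = H' G t) -> PW rho N n H = PW rho N n H'.
Proof.
  induction n as [|m IH]; intros H H' E; simpl; auto.
  apply sum_eq; intros k _. f_equal. apply IH. intros; apply E.
Qed.

Lemma PW_plus rho N n : forall H H', PW rho N n (fun G t => H G t + H' G t) = PW rho N n H + PW rho N n H'.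
Proof.
  induction n as [|m IH]; intros H H'; simpl; auto.
  rewrite <- sum_plus. apply sum_eq; intros k _. rewrite IH. ring.
Qed.

Lemma PW_scal rho N n : forall c H, PW rho N n (fun G t => c * H G t) = c * PW rho N n H.
Proof.
  induction n as [|m IH]; intros c H; simpl; auto.
  rewrite scal_sum. apply sum_eq; intros k _. rewrite IH. ring.
Qed.

Lemma PW_const rho N n : forall c, PW rho N n (fun _ _ => c) = c * pM rho N ^ n.
Proof.
  induction n as [|m IH]; intros c; simpl. ring.
  transitivity (sum_f_R0 (fun k => geom rho k * (c * pM rho N ^ m)) N).
  apply sum_eq; intros k _; rewrite IH; reflexivity.
  rewrite <- (scal_sum (geom rho) N (c * pM rho N ^ m)). unfold pM. ring.
Qed.

Lemma PW_le rho N n : 0 <= rho -> forall H H', (forall G t, H G t <= H' G t) -> PW rho N n H <= PW rho N n H'.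
Proof.
  intros Hr; induction n as [|m IH]; intros H H' E; simpl; auto.
  apply sum_Rle; intros k _. apply Rmult_le_compat_l; [apply geom_nonneg; auto|]. apply IH. intros; apply E.
Qed.

Lemma wsum_PW rho N n : forall a H eta,
  wsum rho N a n (fun xi => H (gcount xi a n) (blocksum xi a n)) eta = PW rho N n H.
Proof.
  induction n as [|m IH]; intros a H eta; simpl; auto.
  apply sum_eq; intros k _. f_equal.
  rewrite <- (IH (a+1)%Z (fun G t => H (gi k + G)%nat (k + t)%nat) (upd eta a k)).
  apply wsum_ext_local. intros xi Hxi.
  rewrite (Hxi a) by lia. unfold upd. destruct (Z.eq_dec a a); [reflexivity|congruence].
Qed.

Lemma blocksum_local n : forall a xi xi', (forall x, (a <= x < a + Z.of_nat n)%Z -> xi x = xi' x) ->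
  blocksum xi a n = blocksum xi' a n.
Proof.
  induction n as [|m IH]; intros a xi xi' H; simpl; auto.
  rewrite (H a) by lia. f_equal. apply IH. intros; apply H; lia.
Qed.

Lemma sumVg_eq rho n : forall xi a, sumVg rho xi a n =
  INR (gcount xi a n) - INR n * phi rho - phi' rho * (INR (blocksum xi a n) - INR n * rho).
Proof.
  induction n as [|m IH]; intros xi a; simpl sumVg; simpl gcount; simpl blocksum.
  - simpl. ring.
  - rewrite IH. rewrite !plus_INR, S_INR. unfold Vg.
    assert (g (xi a) = INR (gi (xi a))) by (destruct (xi a); simpl; auto).
    rewrite H. ring.
Qed.

Fixpoint NN (n s : nat) : R :=
  match n with O => if Nat.eqb s 0 then 1 else 0
  | S m => sum_f_R0 (fun k => NN m (s - k)) s end.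
Fixpoint UU (n s : nat) : R :=
  match n with O => 0
  | S m => sum_f_R0 (fun k => INR (gi k) * NN m (s - k) + UU m (s - k)) s end.

Lemma sum_trunc (a : nat -> R) s N : (s <= N)%nat -> (forall k, (s < k <= N)%nat -> a k = 0) ->
  sum_f_R0 a N = sum_f_R0 a s.
Proof.
  intros H. induction H as [|N HN IHN]; intros Z; auto.
  rewrite tech5. rewrite Z by lia. rewrite IHN. ring. intros; apply Z; lia.
Qed.

Definition cc rho := 1 / (1 + rho).
Definition qq rho := rho / (1 + rho).

Lemma PW_zero rho N n : PW rho N n (fun _ _ => 0) = 0.
Proof. rewrite PW_const. ring. Qed.

Lemma PW_ind rho N n : forall s, (s <= N)%nat ->
  PW rho N n (fun G t => if Nat.eqb t s then 1 else 0) = cc rho ^ n * qq rho ^ s * NN n s.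
Proof.
  induction n as [|m IH]; intros s Hs.
  - simpl. destruct s; simpl; ring.
  - simpl PW. rewrite (sum_trunc _ s N Hs).
    2:{ intros k Hk. rewrite (PW_ext _ _ _ _ (fun _ _ => 0)). rewrite PW_zero; ring.
        intros G t. destruct (Nat.eqb_spec (k+t) s); [lia|reflexivity]. }
    simpl NN. rewrite scal_sum. apply sum_eq; intros k Hk.
    rewrite (PW_ext _ _ _ _ (fun G t => if Nat.eqb t (s - k) then 1 else 0)).
    2:{ intros G t. destruct (Nat.eqb_spec (k+t) s), (Nat.eqb_spec t (s-k)); auto; lia. }
    rewrite IH by lia. unfold geom, cc, qq.
    assert (E : (rho / (1 + rho)) ^ s = (rho / (1 + rho)) ^ k * (rho / (1 + rho)) ^ (s - k))
      by (rewrite <- pow_add; f_equal; lia).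
    rewrite E. simpl. ring.
Qed.

Lemma PW_indG rho N n : forall s, (s <= N)%nat ->
  PW rho N n (fun G t => if Nat.eqb t s then INR G else 0) = cc rho ^ n * qq rho ^ s * UU n s.
Proof.
  induction n as [|m IH]; intros s Hs.
  - simpl. destruct s; simpl; ring.
  - simpl PW. rewrite (sum_trunc _ s N Hs).
    2:{ intros k Hk. rewrite (PW_ext _ _ _ _ (fun _ _ => 0)). rewrite PW_zero; ring.
        intros G t. destruct (Nat.eqb_spec (k+t) s); [lia|reflexivity]. }
    simpl UU. rewrite scal_sum. apply sum_eq; intros k Hk.
    rewrite (PW_ext _ _ _ _ (fun G t => INR (gi k) * (if Nat.eqb t (s - k) then 1 else 0)
                                   + (if Nat.eqb t (s - k) then INR G else 0))).
    2:{ intros G t. destruct (Nat.eqb_spec (k+t) s), (Nat.eqb_spec t (s-k)); try lia.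
        rewrite plus_INR; ring. ring. }
    rewrite PW_plus, PW_scal, IH, PW_ind by lia. unfold geom, cc, qq.
    assert (E : (rho / (1 + rho)) ^ s = (rho / (1 + rho)) ^ k * (rho / (1 + rho)) ^ (s - k))
      by (rewrite <- pow_add; f_equal; lia).
    rewrite E. simpl. ring.
Qed.

Lemma fact_S x : fact (S x) = (S x * fact x)%nat.
Proof. reflexivity. Qed.

Lemma C_nn n : C n n = 1.
Proof. unfold C. rewrite Nat.sub_diag. simpl. field. apply INR_fact_neq_0. Qed.

Lemma C_pos n k : (k <= n)%nat -> 0 < C n k.
Proof.
  intros _. unfold C. apply Rmult_lt_0_compat. apply INR_fact_lt_0.
  apply Rinv_0_lt_compat. apply Rmult_lt_0_compat; apply INR_fact_lt_0.
Qed.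

Lemma hockey n s : sum_f_R0 (fun k => C (s - k + n) n) s = C (s + S n) (S n).
Proof.
  induction s as [|s IH].
  - simpl. rewrite C_nn. replace (S n) with (S n + 0)%nat at 1 by lia.
    replace (S n + 0)%nat with (S n) by lia. rewrite C_nn. ring.
  - rewrite decomp_sum by lia. simpl pred.
    replace (sum_f_R0 (fun i => C (S s - S i + n) n) s) with (sum_f_R0 (fun k => C (s - k + n) n) s).
    2:{ apply sum_eq; intros; f_equal; lia. }
    rewrite IH. replace (S s - 0 + n)%nat with (s + S n)%nat by lia.
    replace (S s + S n)%nat with (S (s + S n)) by lia.
    apply pascal. lia.
Qed.

Lemma NN_C n s : NN (S n) s = C (s + n) n.
Proof.
  revert s. induction n as [|n IH]; intros s.
  - simpl.
    transitivity (1). 2:{ unfold C. rewrite Nat.add_0_r, Nat.sub_0_r. simpl. field. apply INR_fact_neq_0. }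
    destruct s as [|s]. simpl. reflexivity.
    rewrite tech5. rewrite Nat.sub_diag. simpl Nat.eqb.
    rewrite (sum_eq _ (fun _ => 0)). rewrite sum_cte. ring.
    intros i Hi. change (match i with 0 => S s | S l => s - l end)%nat with (S s - i)%nat. destruct (Nat.eqb_spec (S s - i) 0); [lia|reflexivity].
  - change (NN (S (S n)) s) with (sum_f_R0 (fun k => NN (S n) (s - k)) s).
    rewrite (sum_eq _ (fun k => C (s - k + n) n)) by (intros; apply IH).
    rewrite hockey. reflexivity.
Qed.

Lemma NN_pos n s : (1 <= n)%nat -> 0 < NN n s.
Proof. intros H. destruct n as [|n]; [lia|]. rewrite NN_C. apply C_pos. lia. Qed.

Lemma NN_ratio n s : (1 <= n)%nat -> INR (S s) * NN n (S s) = (INR (S s) + INR n - 1) * NN n s.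
Proof.
  intros H. destruct n as [|n]; [lia|]. rewrite !NN_C. unfold C.
  replace (S s + n - n)%nat with (S s) by lia. replace (s + n - n)%nat with s by lia.
  replace (S s + n)%nat with (S (s + n)) by lia.
  rewrite (fact_S (s+n)), (fact_S s), !mult_INR.
  replace (INR (S s) + INR (S n) - 1) with (INR (S (s + n))) by (rewrite !S_INR, plus_INR; ring).
  assert (INR (fact n) <> 0) by apply INR_fact_neq_0.
  assert (INR (fact s) <> 0) by apply INR_fact_neq_0.
  assert (INR (S s) <> 0) by (apply not_0_INR; lia).
  field. tauto.
Qed.

Lemma UU_0 n : UU n 0 = 0.
Proof. induction n; simpl; [reflexivity|]. rewrite IHn. simpl. ring. Qed.

Lemma UU_S n s : UU n (S s) = INR n * NN n s.
Proof.
  revert s. induction n as [|n IH]; intros s. simpl; ring.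
  change (UU (S n) (S s)) with (sum_f_R0 (fun k => INR (gi k) * NN n (S s - k) + UU n (S s - k)) (S s)).
  rewrite sum_plus.
  rewrite decomp_sum by lia. simpl pred. rewrite tech5. rewrite Nat.sub_diag, UU_0.
  rewrite (sum_eq (fun i => INR (gi (S i)) * NN n (S s - S i)) (fun k => NN n (s - k))) by (intros; simpl; ring).
  rewrite (sum_eq (fun k => UU n (S s - k)) (fun k => NN n (s - k) * INR n)).
  2:{ intros i Hi. replace (S s - i)%nat with (S (s - i)) by lia. rewrite IH; ring. }
  rewrite <- scal_sum. change (sum_f_R0 (fun k => NN n (s - k)) s) with (NN (S n) s).
  rewrite S_INR. simpl. ring.
Qed.

Definition fn (n s : nat) : R := INR n * INR s / (INR s + INR n - 1).
Definition Gn rho n s := fn n s - INR n * phi rho - phi' rho * (INR s - INR n * rho).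

Lemma condE_closed rho n b eta : 0 < rho -> (1 <= n)%nat ->
  condE rho b n (fun xi => sumVg rho xi b n) eta = Gn rho n (blocksum eta b n).
Proof.
  intros Hr Hn. unfold condE, box_exp. set (s := blocksum eta b n).
  set (Y := - (INR n * phi rho + phi' rho * (INR s - INR n * rho))).
  rewrite (wsum_ext _ _ _ _ _ (fun xi => (fun G t => (if Nat.eqb t s then INR G else 0) + Y * (if Nat.eqb t s then 1 else 0)) (gcount xi b n) (blocksum xi b n))).
  2:{ intros xi. rewrite sumVg_eq. destruct (Nat.eqb_spec (blocksum xi b n) s) as [E|E].
      rewrite E. unfold Y. ring. ring. }
  rewrite (wsum_PW rho s n b (fun G t => if Nat.eqb t s then 1 else 0)).
  rewrite (wsum_PW rho s n b (fun G t => (if Nat.eqb t s then INR G else 0) + Y * (if Nat.eqb t s then 1 else 0))).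
  rewrite PW_plus, PW_scal, PW_indG, PW_ind by lia.
  assert (Hc : 0 < cc rho ^ n * qq rho ^ s).
  { unfold cc, qq. apply Rmult_lt_0_compat; apply pow_lt; apply Rdiv_lt_0_compat; lra. }
  assert (HN := NN_pos n s Hn).
  replace ((cc rho ^ n * qq rho ^ s * UU n s + Y * (cc rho ^ n * qq rho ^ s * NN n s)) /
      (cc rho ^ n * qq rho ^ s * NN n s)) with (UU n s / NN n s + Y).
  2:{ assert (0 < cc rho ^ n) by (unfold cc; apply pow_lt; apply Rdiv_lt_0_compat; lra).
      assert (0 < qq rho ^ s) by (unfold qq; apply pow_lt; apply Rdiv_lt_0_compat; lra).
      field; repeat split; lra. }
  unfold Gn, Y. assert (UU n s / NN n s = fn n s); [|rewrite H; ring].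
  unfold fn. destruct s as [|s'].
  - rewrite UU_0. simpl. unfold Rdiv. ring.
  - rewrite UU_S. assert (E := NN_ratio n s' Hn).
    assert (0 < INR (S s') + INR n - 1) by (rewrite S_INR; assert (1 <= INR n) by (apply (le_INR 1); auto); pose proof (pos_INR s'); lra).
    assert (HN' := NN_pos n s' Hn).
    apply (Rmult_eq_reg_r (NN n (S s') * (INR (S s') + INR n - 1))).
    2:{ apply Rmult_integral_contrapositive; split; lra. }
    transitivity (INR n * ((INR (S s') + INR n - 1) * NN n s')). field; lra.
    rewrite <- E. field; lra.
Qed.

Definition Sj (eta : Z -> nat) (a : Z) (K j : nat) : nat := blocksum eta (a + Z.of_nat (j * K)) K.

Lemma rsum_ext f f' L : (forall j, (j < L)%nat -> f j = f' j) -> rsum f L = rsum f' L.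
Proof. induction L; intros H; simpl; auto. rewrite IHL, H; auto. Qed.

Lemma blocksum_split n1 : forall n2 eta a,
  blocksum eta a (n1 + n2) = (blocksum eta a n1 + blocksum eta (a + Z.of_nat n1) n2)%nat.
Proof.
  induction n1 as [|m IH]; intros n2 eta a; simpl.
  - f_equal; lia.
  - rewrite IH. replace (a + 1 + Z.of_nat m)%Z with (a + Z.pos (Pos.of_succ_nat m))%Z by lia. lia.
Qed.

Lemma blocksum_blocks eta a K L :
  INR (blocksum eta a (L * K)) = rsum (fun j => INR (Sj eta a K j)) L.
Proof.
  induction L as [|L IH]; simpl rsum. reflexivity.
  replace (S L * K)%nat with (L * K + K)%nat by lia. rewrite blocksum_split, plus_INR, IH.
  unfold Sj. reflexivity.
Qed.

Lemma rsum_G rho K L eta a :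
  rsum (fun j => Gn rho K (Sj eta a K j)) L =
  rsum (fun j => fn K (Sj eta a K j)) L - INR L * (INR K * phi rho)
  - phi' rho * (rsum (fun j => INR (Sj eta a K j)) L - INR L * INR K * rho).
Proof.
  induction L as [|L IH]; simpl rsum. simpl; ring.
  rewrite IH, S_INR. unfold Gn. ring.
Qed.

Lemma V2_eq rho a K L eta : 0 < rho -> (1 <= K)%nat -> (1 <= L)%nat ->
  V2 rho a K L eta = rsum (fun j => fn K (Sj eta a K j)) L - fn (L * K) (blocksum eta a (L * K)).
Proof.
  intros Hr HK HL. unfold V2.
  rewrite (rsum_ext _ (fun j => Gn rho K (Sj eta a K j))).
  2:{ intros j _. simpl. apply condE_closed; auto. }
  rewrite condE_closed by (auto; nia).
  rewrite rsum_G. unfold Gn. rewrite blocksum_blocks, mult_INR. ring.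
Qed.

Lemma fn_bounds n s : (1 <= n)%nat -> 0 <= fn n s <= INR n.
Proof.
  intros Hn. unfold fn. assert (1 <= INR n) by (apply (le_INR 1); auto).
  pose proof (pos_INR s). destruct s as [|s].
  - simpl. unfold Rdiv. rewrite Rmult_0_r, Rmult_0_l. lra.
  - assert (1 <= INR (S s)) by (apply (le_INR 1); lia).
    split. unfold Rdiv; apply Rmult_le_pos; [nra| left; apply Rinv_0_lt_compat; lra].
    apply Rmult_le_reg_r with (INR (S s) + INR n - 1). lra.
    unfold Rdiv. rewrite Rmult_assoc, Rinv_l by lra. nra.
Qed.

Definition W rho M n (h : nat -> R) := PW rho M n (fun _ t => h t).

Lemma wsum_W rho M n a h eta :
  wsum rho M a n (fun xi => h (blocksum xi a n)) eta = W rho M n h.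
Proof. unfold W. rewrite <- (wsum_PW rho M n a (fun _ t => h t) eta). reflexivity. Qed.

Lemma geom_S rho k : 0 < rho -> geom rho (S k) = qq rho * geom rho k.
Proof. intros. unfold geom, qq. simpl. ring. Qed.

Lemma geom_0 rho : geom rho 0 = cc rho.
Proof. unfold geom, cc. simpl. ring. Qed.

Lemma qq_bounds rho : 0 < rho -> 0 < qq rho < 1 /\ 1 - qq rho = cc rho /\ qq rho / (1 - qq rho) = rho.
Proof.
  intros H. unfold qq, cc. split; [split|split].
  - apply Rdiv_lt_0_compat; lra.
  - apply Rmult_lt_reg_r with (1 + rho); [lra|]. unfold Rdiv. rewrite Rmult_assoc, Rinv_l by lra. lra.
  - field. lra.
  - field. split; [lra|]. intro E. field_simplify in E; lra.
Qed.

Lemma sum_geom_shift rho f M : 0 < rho ->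
  sum_f_R0 (fun k => geom rho k * f k) (S M) = cc rho * f 0%nat + qq rho * sum_f_R0 (fun k => geom rho k * f (S k)) M.
Proof.
  intros H. rewrite decomp_sum by lia. simpl pred. rewrite geom_0. f_equal.
  rewrite scal_sum. apply sum_eq. intros i _. rewrite geom_S by auto. ring.
Qed.

Lemma sum_geom_bound rho f M : 0 < rho -> (forall k, 0 <= f k) ->
  cc rho * sum_f_R0 (fun k => geom rho k * f k) M <=
  cc rho * f 0%nat + qq rho * sum_f_R0 (fun k => geom rho k * (f (S k) - f k)) M.
Proof.
  intros H Hf. destruct (qq_bounds rho H) as [[Hq0 Hq1] [Hc _]].
  assert (Hm : sum_f_R0 (fun k => geom rho k * f k) M <= sum_f_R0 (fun k => geom rho k * f k) (S M)).
  { rewrite tech5. assert (0 <= geom rho (S M) * f (S M)) by (apply Rmult_le_pos; [apply geom_nonneg; lra| auto]). lra. }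
  rewrite sum_geom_shift in Hm by auto.
  assert (E : sum_f_R0 (fun k => geom rho k * (f (S k) - f k)) M =
     sum_f_R0 (fun k => geom rho k * f (S k)) M - sum_f_R0 (fun k => geom rho k * f k) M).
  { rewrite <- minus_sum. apply sum_eq; intros; ring. }
  rewrite E. rewrite <- Hc. nra.
Qed.

Definition mom rho M j := sum_f_R0 (fun k => geom rho k * INR k ^ j) M.

Lemma mom_nonneg rho M j : 0 < rho -> 0 <= mom rho M j.
Proof.
  intros H. unfold mom. apply cond_pos_sum. intros. apply Rmult_le_pos. apply geom_nonneg; lra. apply pow_le, pos_INR.
Qed.

Lemma pM_mom rho M : pM rho M = mom rho M 0.
Proof. unfold pM, mom. apply sum_eq. intros; simpl; ring. Qed.

Lemma mom_rec rho M j : 0 < rho ->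
  cc rho * mom rho M j <= cc rho * (match j with O => 1 | _ => 0 end) +
     qq rho * sum_f_R0 (fun k => geom rho k * ((INR k + 1) ^ j - INR k ^ j)) M.
Proof.
  intros H. unfold mom. eapply Rle_trans. apply (sum_geom_bound rho (fun k => INR k ^ j)); auto.
  intros; apply pow_le, pos_INR.
  apply Rplus_le_compat. destruct j; simpl; lra.
  right. f_equal. apply sum_eq. intros. rewrite S_INR. reflexivity.
Qed.

Lemma sum_lin rho M (d : nat -> R) x0 x1 x2 x3 x4 :
  sum_f_R0 (fun k => geom rho k * (x0 + x1 * d k + x2 * d k ^ 2 + x3 * d k ^ 3 + x4 * d k ^ 4)) M =
  x0 * sum_f_R0 (fun k => geom rho k * d k ^ 0) M + x1 * sum_f_R0 (fun k => geom rho k * d k ^ 1) M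
  + x2 * sum_f_R0 (fun k => geom rho k * d k ^ 2) M + x3 * sum_f_R0 (fun k => geom rho k * d k ^ 3) M
  + x4 * sum_f_R0 (fun k => geom rho k * d k ^ 4) M.
Proof. induction M. simpl; ring. rewrite !tech5, IHM. ring. Qed.

Lemma mom_bounds rho M : 0 < rho ->
  pM rho M <= 1 /\ mom rho M 1 <= rho /\ mom rho M 2 <= rho * (2 * rho + 1) /\
  mom rho M 3 <= rho * (3 * (rho * (2 * rho + 1)) + 3 * rho + 1) /\
  mom rho M 4 <= rho * (4 * (rho * (3 * (rho * (2 * rho + 1)) + 3 * rho + 1)) + 6 * (rho * (2 * rho + 1)) + 4 * rho + 1).
Proof.
  intros H. destruct (qq_bounds rho H) as [[Hq0 Hq1] [Hc Hqr]].
  assert (Hcp : 0 < cc rho) by (rewrite <- Hc; lra).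
  assert (Hq : qq rho = rho * cc rho) by (unfold qq, cc; field; lra).
  assert (R0 := mom_rec rho M 0 H). assert (R1 := mom_rec rho M 1 H).
  assert (R2 := mom_rec rho M 2 H). assert (R3 := mom_rec rho M 3 H). assert (R4 := mom_rec rho M 4 H).
  rewrite (sum_eq _ (fun k => geom rho k * (0 + 0 * INR k + 0 * INR k ^ 2 + 0 * INR k ^ 3 + 0 * INR k ^ 4))) in R0 by (intros; simpl; ring).
  rewrite (sum_eq _ (fun k => geom rho k * (1 + 0 * INR k + 0 * INR k ^ 2 + 0 * INR k ^ 3 + 0 * INR k ^ 4))) in R1 by (intros; simpl; ring).
  rewrite (sum_eq _ (fun k => geom rho k * (1 + 2 * INR k + 0 * INR k ^ 2 + 0 * INR k ^ 3 + 0 * INR k ^ 4))) in R2 by (intros; simpl; ring).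
  rewrite (sum_eq _ (fun k => geom rho k * (1 + 3 * INR k + 3 * INR k ^ 2 + 0 * INR k ^ 3 + 0 * INR k ^ 4))) in R3 by (intros; simpl; ring).
  rewrite (sum_eq _ (fun k => geom rho k * (1 + 4 * INR k + 6 * INR k ^ 2 + 4 * INR k ^ 3 + 0 * INR k ^ 4))) in R4 by (intros; simpl; ring).
  rewrite (sum_lin rho M INR) in R0, R1, R2, R3, R4. fold (mom rho M 0) (mom rho M 1) (mom rho M 2) (mom rho M 3) (mom rho M 4) in *.
  rewrite <- pM_mom in *. rewrite Hq in R0, R1, R2, R3, R4.
  assert (P0 : pM rho M <= 1).
  { apply Rmult_le_reg_l with (cc rho); auto. simpl in R0. assert (0 <= pM rho M) by (rewrite pM_mom; apply mom_nonneg; auto). nra. }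
  assert (M1 : mom rho M 1 <= rho).
  { apply Rmult_le_reg_l with (cc rho); auto. simpl in R1. assert (0 <= pM rho M) by (rewrite pM_mom; apply mom_nonneg; auto). nra. }
  assert (M2 : mom rho M 2 <= rho * (2 * rho + 1)).
  { apply Rmult_le_reg_l with (cc rho); auto. simpl in R2. pose proof (mom_nonneg rho M 2 H). nra. }
  assert (M3 : mom rho M 3 <= rho * (3 * (rho * (2 * rho + 1)) + 3 * rho + 1)).
  { apply Rmult_le_reg_l with (cc rho); auto. simpl in R3. pose proof (mom_nonneg rho M 2 H). nra. }
  repeat split; auto.
  apply Rmult_le_reg_l with (cc rho); auto. simpl in R4. pose proof (mom_nonneg rho M 2 H). nra.
Qed.

Lemma W_ext rho M n f g : (forall t, f t = g t) -> W rho M n f = W rho M n g.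
Proof. intros; unfold W; apply PW_ext; auto. Qed.
Lemma W_plus rho M n f g : W rho M n (fun t => f t + g t) = W rho M n f + W rho M n g.
Proof. unfold W. apply (PW_plus rho M n (fun _ t => f t) (fun _ t => g t)). Qed.
Lemma W_scal rho M n c f : W rho M n (fun t => c * f t) = c * W rho M n f.
Proof. unfold W. apply (PW_scal rho M n c (fun _ t => f t)). Qed.
Lemma W_const rho M n c : W rho M n (fun _ => c) = c * pM rho M ^ n.
Proof. unfold W. apply PW_const. Qed.
Lemma W_le rho M n f g : 0 <= rho -> (forall t, f t <= g t) -> W rho M n f <= W rho M n g.
Proof. intros; unfold W; apply PW_le; auto. Qed.
Lemma W_nonneg rho M n f : 0 <= rho -> (forall t, 0 <= f t) -> 0 <= W rho M n f.
Proof. intros. apply Rle_trans with (W rho M n (fun _ => 0)). rewrite W_const; lra. apply W_le; auto. Qed.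
Lemma W_S rho M n h : W rho M (S n) h = sum_f_R0 (fun k => geom rho k * W rho M n (fun t => h (k + t)%nat)) M.
Proof. reflexivity. Qed.

Lemma pM_pos rho M : 0 < rho -> cc rho <= pM rho M.
Proof.
  intros H. unfold pM. induction M. simpl. rewrite geom_0. lra.
  rewrite tech5. pose proof (geom_nonneg rho (S M)). lra.
Qed.

Definition mu rho M := mom rho M 1 / pM rho M.
Definition ee rho M j := sum_f_R0 (fun k => geom rho k * (INR k - mu rho M) ^ j) M.
Definition AA rho M n j := W rho M n (fun t => (INR t - INR n * mu rho M) ^ j).

Lemma cc_pos rho : 0 < rho -> 0 < cc rho.
Proof. intros; unfold cc; apply Rdiv_lt_0_compat; lra. Qed.

Lemma ee1 rho M : 0 < rho -> ee rho M 1 = 0.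
Proof.
  intros H. unfold ee. rewrite (sum_eq _ (fun k => geom rho k * INR k ^ 1 - geom rho k * mu rho M)) by (intros; ring).
  rewrite minus_sum. fold (mom rho M 1). rewrite <- scal_sum. fold (pM rho M).
  pose proof (pM_pos rho M H). pose proof (cc_pos rho H).
  unfold mu. field. lra.
Qed.

Lemma W_lin5 rho M n (u : nat -> R) x0 x1 x2 x3 x4 :
  W rho M n (fun t => x0 + x1 * u t + x2 * u t ^ 2 + x3 * u t ^ 3 + x4 * u t ^ 4) =
  x0 * pM rho M ^ n + x1 * W rho M n u + x2 * W rho M n (fun t => u t ^ 2)
  + x3 * W rho M n (fun t => u t ^ 3) + x4 * W rho M n (fun t => u t ^ 4).
Proof. rewrite !W_plus, !W_scal, W_const. ring. Qed.

Lemma AA_S rho M n j (x : nat -> R -> R) :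
  (forall d u, (d + u) ^ j = x 0%nat d + x 1%nat d * u + x 2%nat d * u ^ 2 + x 3%nat d * u ^ 3 + x 4%nat d * u ^ 4) ->
  AA rho M (S n) j = sum_f_R0 (fun k => geom rho k *
     (x 0%nat (INR k - mu rho M) * pM rho M ^ n + x 1%nat (INR k - mu rho M) * AA rho M n 1
      + x 2%nat (INR k - mu rho M) * AA rho M n 2 + x 3%nat (INR k - mu rho M) * AA rho M n 3
      + x 4%nat (INR k - mu rho M) * AA rho M n 4)) M.
Proof.
  intros Hx. unfold AA. rewrite W_S. apply sum_eq. intros k _. f_equal.
  rewrite (W_ext _ _ _ _ (fun t => x 0%nat (INR k - mu rho M) + x 1%nat (INR k - mu rho M) * (INR t - INR n * mu rho M)
      + x 2%nat (INR k - mu rho M) * (INR t - INR n * mu rho M) ^ 2 + x 3%nat (INR k - mu rho M) * (INR t - INR n * mu rho M) ^ 3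
      + x 4%nat (INR k - mu rho M) * (INR t - INR n * mu rho M) ^ 4)).
  2:{ intros t. rewrite <- Hx. f_equal. rewrite plus_INR, S_INR. ring. }
  rewrite W_lin5. rewrite (W_ext _ _ _ (fun t => INR t - INR n * mu rho M) (fun t => (INR t - INR n * mu rho M) ^ 1)) by (intros; ring). reflexivity.
Qed.

Lemma AA1_rec rho M n : AA rho M (S n) 1 = ee rho M 1 * pM rho M ^ n + pM rho M * AA rho M n 1.
Proof.
  rewrite (AA_S rho M n 1 (fun i d => match i with 0%nat => d | 1%nat => 1 | _ => 0 end)) by (intros; simpl; ring).
  set (d := fun k => INR k - mu rho M).
  rewrite (sum_eq _ (fun k => geom rho k * (AA rho M n 1 + (pM rho M ^ n) * d k + 0 * d k ^ 2 + 0 * d k ^ 3 + 0 * d k ^ 4)))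
    by (intros; unfold d; simpl; ring).
  rewrite sum_lin. unfold ee, pM. rewrite (sum_eq (fun k => geom rho k * d k ^ 0) (geom rho)) by (intros; simpl; ring).
  unfold d. ring.
Qed.

Lemma AA1_zero rho M n : 0 < rho -> AA rho M n 1 = 0.
Proof.
  intros H. induction n. unfold AA, W. simpl. ring.
  rewrite AA1_rec, IHn, ee1 by auto. ring.
Qed.

Lemma AA2_rec rho M n : 0 < rho -> AA rho M (S n) 2 = ee rho M 2 * pM rho M ^ n + pM rho M * AA rho M n 2.
Proof.
  intros H.
  rewrite (AA_S rho M n 2 (fun i d => match i with 0%nat => d ^ 2 | 1%nat => 2 * d | 2%nat => 1 | _ => 0 end)) by (intros; simpl; ring).
  rewrite AA1_zero by auto.
  set (d := fun k => INR k - mu rho M).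
  rewrite (sum_eq _ (fun k => geom rho k * (AA rho M n 2 + 0 * d k + (pM rho M ^ n) * d k ^ 2 + 0 * d k ^ 3 + 0 * d k ^ 4)))
    by (intros; unfold d; simpl; ring).
  rewrite sum_lin. unfold ee, pM. rewrite (sum_eq (fun k => geom rho k * d k ^ 0) (geom rho)) by (intros; simpl; ring).
  unfold d. ring.
Qed.

Lemma AA4_rec rho M n : 0 < rho -> AA rho M (S n) 4 =
  ee rho M 4 * pM rho M ^ n + 6 * ee rho M 2 * AA rho M n 2 + pM rho M * AA rho M n 4.
Proof.
  intros H.
  rewrite (AA_S rho M n 4 (fun i d => match i with 0%nat => d ^ 4 | 1%nat => 4 * d ^ 3 | 2%nat => 6 * d ^ 2 | 3%nat => 4 * d | _ => 1 end)) by (intros; simpl; ring).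
  rewrite AA1_zero by auto.
  set (d := fun k => INR k - mu rho M).
  rewrite (sum_eq _ (fun k => geom rho k * (AA rho M n 4 + (4 * AA rho M n 3) * d k + (6 * AA rho M n 2) * d k ^ 2 + 0 * d k ^ 3 + (pM rho M ^ n) * d k ^ 4)))
    by (intros; unfold d; simpl; ring).
  rewrite sum_lin. pose proof (ee1 rho M H) as E1. unfold ee in *. unfold pM.
  rewrite (sum_eq (fun k => geom rho k * d k ^ 0) (geom rho)) by (intros; simpl; ring).
  unfold d. rewrite E1. ring.
Qed.

Lemma pow_le1 x n : 0 <= x <= 1 -> x ^ n <= 1.
Proof. intros H. induction n; simpl. lra. pose proof (pow_le x n). nra. Qed.

Definition mubar rho := rho * (1 + rho).
Definition B2 rho := rho * (2 * rho + 1).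
Definition B4 rho := rho * (4 * (rho * (3 * (rho * (2 * rho + 1)) + 3 * rho + 1)) + 6 * (rho * (2 * rho + 1)) + 4 * rho + 1).
Definition E2c rho := 2 * (B2 rho + mubar rho ^ 2).
Definition E4c rho := 8 * (B4 rho + mubar rho ^ 4).

Lemma pM_01 rho M : 0 < rho -> 0 < pM rho M <= 1.
Proof. intros H. pose proof (pM_pos rho M H). pose proof (cc_pos rho H). destruct (mom_bounds rho M H). lra. Qed.

Lemma mu_bounds rho M : 0 < rho -> 0 <= mu rho M <= mubar rho.
Proof.
  intros H. unfold mu, mubar. pose proof (pM_pos rho M H). pose proof (cc_pos rho H).
  destruct (mom_bounds rho M H) as [_ [Hm1 _]]. pose proof (mom_nonneg rho M 1 H).
  split. unfold Rdiv; apply Rmult_le_pos; [lra| left; apply Rinv_0_lt_compat; lra].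
  apply Rmult_le_reg_r with (pM rho M). lra. unfold Rdiv. rewrite Rmult_assoc, Rinv_l by lra.
  assert (rho * (1 + rho) * cc rho = rho) by (unfold cc; field; lra). nra.
Qed.

Lemma sum_pM rho M : sum_f_R0 (fun k => geom rho k * INR k ^ 0) M = pM rho M.
Proof. unfold pM. apply sum_eq. intros; simpl; ring. Qed.

Lemma ee2_bounds rho M : 0 < rho -> 0 <= ee rho M 2 <= E2c rho.
Proof.
  intros H. pose proof (mu_bounds rho M H). pose proof (pM_01 rho M H).
  destruct (mom_bounds rho M H) as [_ [_ [Hm2 _]]]. split.
  - unfold ee. apply cond_pos_sum. intros. apply Rmult_le_pos. apply geom_nonneg; lra. apply pow2_ge_0.
  - unfold ee. eapply Rle_trans.
    apply (sum_Rle _ (fun k => geom rho k * (2 * mu rho M ^ 2 + 0 * INR k + 2 * INR k ^ 2 + 0 * INR k ^ 3 + 0 * INR k ^ 4))).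
    intros k _. apply Rmult_le_compat_l. apply geom_nonneg; lra. pose proof (pos_INR k). nra.
    rewrite sum_lin, sum_pM. fold (mom rho M 1) (mom rho M 2) (mom rho M 3) (mom rho M 4).
    unfold E2c. fold (B2 rho) in Hm2.
    assert (mu rho M ^ 2 <= mubar rho ^ 2) by (apply pow_incr; lra).
    assert (0 <= mu rho M ^ 2) by (apply pow_le; lra). nra.
Qed.

Lemma pow4_bound x m : (x - m) ^ 4 <= 8 * (x ^ 4 + m ^ 4).
Proof.
  assert (H1 : (x - m) ^ 2 <= 2 * (x ^ 2 + m ^ 2)) by (pose proof (pow2_ge_0 (x + m)); nra).
  assert (H2 : 0 <= (x - m) ^ 2) by apply pow2_ge_0.
  replace ((x - m) ^ 4) with (((x - m) ^ 2) ^ 2) by ring.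
  apply Rle_trans with ((2 * (x ^ 2 + m ^ 2)) ^ 2). apply pow_incr; lra.
  replace (x ^ 4) with ((x^2)^2) by ring. replace (m ^ 4) with ((m^2)^2) by ring.
  pose proof (pow2_ge_0 (x^2 - m^2)). nra.
Qed.

Lemma ee4_bounds rho M : 0 < rho -> 0 <= ee rho M 4 <= E4c rho.
Proof.
  intros H. pose proof (mu_bounds rho M H). pose proof (pM_01 rho M H).
  destruct (mom_bounds rho M H) as [_ [_ [_ [_ Hm4]]]]. split.
  - unfold ee. apply cond_pos_sum. intros i. apply Rmult_le_pos. apply geom_nonneg; lra.
    replace ((INR i - mu rho M) ^ 4) with (((INR i - mu rho M) ^ 2) ^ 2) by ring. apply pow2_ge_0.
  - unfold ee. eapply Rle_trans.
    apply (sum_Rle _ (fun k => geom rho k * (8 * mu rho M ^ 4 + 0 * INR k + 0 * INR k ^ 2 + 0 * INR k ^ 3 + 8 * INR k ^ 4))).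
    intros k _. apply Rmult_le_compat_l. apply geom_nonneg; lra. pose proof (pow4_bound (INR k) (mu rho M)). lra.
    rewrite sum_lin, sum_pM. fold (mom rho M 1) (mom rho M 2) (mom rho M 3) (mom rho M 4).
    unfold E4c. fold (B4 rho) in Hm4.
    assert (mu rho M ^ 4 <= mubar rho ^ 4) by (apply pow_incr; lra).
    assert (0 <= mu rho M ^ 4) by (apply pow_le; lra). nra.
Qed.

Lemma AA2_bounds rho M n : 0 < rho -> 0 <= AA rho M n 2 <= INR n * E2c rho.
Proof.
  intros H. pose proof (pM_01 rho M H). pose proof (ee2_bounds rho M H).
  induction n. unfold AA, W. simpl. lra.
  rewrite AA2_rec by auto. rewrite S_INR.
  assert (0 <= pM rho M ^ n <= 1) by (split; [apply pow_le; lra| apply pow_le1; lra]).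
  nra.
Qed.

Lemma AA4_bounds rho M n : 0 < rho -> 0 <= AA rho M n 4 <= INR n * E4c rho + 3 * INR n ^ 2 * E2c rho ^ 2.
Proof.
  intros H. pose proof (pM_01 rho M H). pose proof (ee2_bounds rho M H). pose proof (ee4_bounds rho M H).
  induction n. unfold AA, W. simpl. lra.
  rewrite AA4_rec by auto. rewrite S_INR. pose proof (AA2_bounds rho M n H). pose proof (pos_INR n).
  assert (0 <= pM rho M ^ n <= 1) by (split; [apply pow_le; lra| apply pow_le1; lra]).
  assert (0 <= ee rho M 2 * AA rho M n 2 <= E2c rho * (INR n * E2c rho)) by (split; nra).
  nra.
Qed.

Lemma R_pointwise (N T m : R) : 2 <= N -> 0 <= T -> 0 <= m ->
  let X := T + N - 1 in let x0 := N * m + N - 1 in let gam := N * (N - 1) / x0 ^ 2 in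
  (N * T / X - gam * T - (N - N * (N - 1) / x0 - gam * (N * m))) ^ 2 <= 16 / N ^ 2 * (T - N * m) ^ 4.
Proof.
  intros HN HT Hm X x0 gam.
  assert (HX : N - 1 <= X) by (unfold X; lra). assert (Hx0 : N - 1 <= x0) by (unfold x0; nra).
  assert (E : N * T / X - gam * T - (N - N * (N - 1) / x0 - gam * (N * m)) =
              - (N * (N - 1) / (X * x0 ^ 2)) * (T - N * m) ^ 2).
  { unfold gam, X, x0. field. split; nra. }
  rewrite E.
  set (c := N * (N - 1) / (X * x0 ^ 2)).
  assert (Hc0 : 0 <= c). { unfold c. apply Rmult_le_pos. nra. left. apply Rinv_0_lt_compat. apply Rmult_lt_0_compat; [lra|]. apply pow_lt; lra. }
  assert (Hc1 : c <= 4 / N).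
  { unfold c. apply Rmult_le_reg_r with (X * x0 ^ 2). apply Rmult_lt_0_compat; [lra|]. apply pow_lt; lra.
    unfold Rdiv. rewrite Rmult_assoc, Rinv_l. 2:{ apply Rgt_not_eq. apply Rmult_lt_0_compat; [lra|]. apply pow_lt; lra. }
    rewrite Rmult_1_r.
    assert (N * (N - 1) <= N * X) by nra.
    assert (N * X <= 4 * / N * (X * x0 ^ 2)).
    { apply Rmult_le_reg_l with N. lra. rewrite <- !Rmult_assoc. replace (N * 4 * / N) with 4 by (field; lra).
      assert (N * N <= 4 * x0 ^ 2) by nra. nra. }
    lra. }
  assert (0 <= (T - N * m) ^ 2) by apply pow2_ge_0.
  replace ((- c * (T - N * m) ^ 2) ^ 2) with (c ^ 2 * ((T - N * m) ^ 2) ^ 2) by ring.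
  replace ((T - N * m) ^ 4) with (((T - N * m) ^ 2) ^ 2) by ring.
  apply Rmult_le_compat_r. apply pow2_ge_0.
  replace (16 / N ^ 2) with ((4 / N) ^ 2) by (field; lra). apply pow_incr. lra.
Qed.

Definition gam rho M n := if Nat.eqb n 1 then 1 / (1 + mu rho M) ^ 2
  else INR n * (INR n - 1) / (INR n * mu rho M + INR n - 1) ^ 2.
Definition en rho M n := if Nat.eqb n 1 then 0
  else INR n - INR n * (INR n - 1) / (INR n * mu rho M + INR n - 1) - gam rho M n * (INR n * mu rho M).
Definition psi rho M n t := fn n t - gam rho M n * INR t.
Definition Bpsi rho := 16 * (E4c rho + 3 * E2c rho ^ 2) + 2 + 2 * B2 rho.

Lemma E_nonneg rho : 0 < rho -> 0 <= E2c rho /\ 0 <= E4c rho /\ 0 <= B2 rho.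
Proof.
  intros H. unfold E2c, E4c, B2, B4, mubar.
  assert (0 <= rho * (1 + rho)) by nra.
  repeat split; try (apply Rmult_le_pos; try lra); try nra.
Qed.

Lemma W1_mom2 rho M : W rho M 1 (fun t => INR t ^ 2) = mom rho M 2.
Proof. unfold W, mom. simpl. apply sum_eq. intros. rewrite Nat.add_0_r. reflexivity. Qed.

Lemma psi_var rho M n : 0 < rho -> (1 <= n)%nat ->
  W rho M n (fun t => (psi rho M n t - en rho M n) ^ 2) <= Bpsi rho.
Proof.
  intros H Hn. pose proof (E_nonneg rho H) as [HE2 [HE4 HB2]]. pose proof (mu_bounds rho M H).
  pose proof (pM_01 rho M H).
  destruct (Nat.eqb_spec n 1) as [->|Hn1].
  - unfold psi, en, gam. simpl Nat.eqb. cbv iota.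
    assert (Hg : 0 <= 1 / (1 + mu rho M) ^ 2 <= 1).
    { split. apply Rdiv_le_0_compat_compat || (unfold Rdiv; apply Rmult_le_pos; [lra| left; apply Rinv_0_lt_compat; apply pow_lt; lra]).
      unfold Rdiv. rewrite Rmult_1_l. apply Rmult_le_reg_r with ((1 + mu rho M) ^ 2). apply pow_lt; lra.
      rewrite Rinv_l by (apply Rgt_not_eq; apply pow_lt; lra). nra. }
    eapply Rle_trans. apply (W_le _ _ _ _ (fun t => 2 + 2 * INR t ^ 2)). lra.
    intros t. pose proof (fn_bounds 1 t (le_n 1)). simpl INR in H2. pose proof (pos_INR t).
    set (gg := 1 / (1 + mu rho M) ^ 2) in *. set (f := fn 1 t) in *.
    assert (0 <= gg * INR t <= INR t) by nra.
    assert ((f - gg * INR t - 0) ^ 2 <= 2 * f ^ 2 + 2 * (gg * INR t) ^ 2) by (pose proof (pow2_ge_0 (f + gg * INR t)); nra).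
    assert (f ^ 2 <= 1) by nra. assert ((gg * INR t) ^ 2 <= INR t ^ 2) by (apply pow_incr; lra). lra.
    rewrite W_plus, W_scal, W_const, W1_mom2. destruct (mom_bounds rho M H) as [_ [_ [Hm2 _]]].
    fold (B2 rho) in Hm2. unfold Bpsi. simpl. nra.
  - assert (Hn2 : 2 <= INR n) by (apply (le_INR 2); lia).
    unfold psi, en, gam. destruct (Nat.eqb_spec n 1); [contradiction|].
    eapply Rle_trans. apply (W_le _ _ _ _ (fun t => 16 / INR n ^ 2 * (INR t - INR n * mu rho M) ^ 4)). lra.
    intros t. unfold fn. apply R_pointwise; auto. apply pos_INR. lra.
    rewrite W_scal. fold (AA rho M n 4). pose proof (AA4_bounds rho M n H).
    apply Rle_trans with (16 / INR n ^ 2 * (INR n * E4c rho + 3 * INR n ^ 2 * E2c rho ^ 2)).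
    apply Rmult_le_compat_l. apply Rmult_le_pos; [lra|left; apply Rinv_0_lt_compat; apply pow_lt; lra]. lra.
    replace (16 / INR n ^ 2 * (INR n * E4c rho + 3 * INR n ^ 2 * E2c rho ^ 2)) with
      (16 * (E4c rho / INR n) + 48 * E2c rho ^ 2) by (field; lra).
    assert (E4c rho / INR n <= E4c rho).
    { apply Rmult_le_reg_r with (INR n). lra. unfold Rdiv. rewrite Rmult_assoc, Rinv_l by lra. nra. }
    unfold Bpsi. nra.
Qed.

Definition Cg rho := 4 * (mubar rho + 2) ^ 2.

Lemma gam_close rho M n : 0 < rho -> (1 <= n)%nat ->
  Rabs (gam rho M n - 1 / (1 + mu rho M) ^ 2) <= Cg rho / INR n.
Proof.
  intros H Hn. pose proof (mu_bounds rho M H). unfold gam.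
  assert (HC : 0 <= Cg rho) by (unfold Cg; apply Rmult_le_pos; [lra|apply pow2_ge_0]).
  destruct (Nat.eqb_spec n 1) as [->|Hn1].
  - rewrite Rminus_diag, Rabs_R0. simpl. lra.
  - assert (HN : 2 <= INR n) by (apply (le_INR 2); lia).
    set (N := INR n) in *. set (x := 1 + mu rho M).
    assert (Hx : 1 <= x <= 1 + mubar rho) by (unfold x; lra).
    assert (Hb : 0 < x ^ 2 * (N * x - 1) ^ 2) by (apply Rmult_lt_0_compat; apply pow_lt; nra).
    replace (N * (N - 1) / (N * mu rho M + N - 1) ^ 2 - 1 / x ^ 2)
      with ((N * x * (2 - x) - 1) / (x ^ 2 * (N * x - 1) ^ 2)).
    2:{ unfold x. field. split; nra. }
    unfold Rdiv. rewrite Rabs_mult, (Rabs_right (/ _)) by (left; apply Rinv_0_lt_compat; auto).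
    assert (Ha : Rabs (N * x * (2 - x) - 1) <= N * (x + 1) ^ 2).
    { apply Rabs_le. split; nra. }
    apply Rmult_le_reg_r with (N * (x ^ 2 * (N * x - 1) ^ 2)). apply Rmult_lt_0_compat; lra.
    assert (Hnx : N * x - 1 > 0) by nra.
    replace (Rabs (N * x * (2 - x) - 1) * / (x ^ 2 * (N * x - 1) ^ 2) * (N * (x ^ 2 * (N * x - 1) ^ 2)))
      with (Rabs (N * x * (2 - x) - 1) * N) by (field; lra).
    replace (Cg rho * / N * (N * (x ^ 2 * (N * x - 1) ^ 2))) with (Cg rho * (x ^ 2 * (N * x - 1) ^ 2)) by (field; lra).
    assert (H1 : N ^ 2 * x ^ 2 <= 4 * (N * x - 1) ^ 2).
    { assert (Hy : 2 <= N * x) by nra. replace (N ^ 2 * x ^ 2) with ((N * x) ^ 2) by ring.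
      set (y := N * x) in *. nra. }
    assert (H2 : (x + 1) ^ 2 <= (mubar rho + 2) ^ 2) by (apply pow_incr; lra).
    assert (Rabs (N * x * (2 - x) - 1) * N <= N ^ 2 * (x + 1) ^ 2) by nra.
    unfold Cg. assert (1 <= x ^ 2) by nra.
    assert (0 <= (x+1)^2) by apply pow2_ge_0.
    assert (G3 : N ^ 2 <= N ^ 2 * x ^ 2) by (assert (0 <= N ^ 2) by apply pow2_ge_0; nra).
    assert (G4 : 4 * (N * x - 1) ^ 2 <= x ^ 2 * (4 * (N * x - 1) ^ 2)) by (assert (0 <= (N*x-1) ^ 2) by apply pow2_ge_0; nra).
    assert (N ^ 2 * (x + 1) ^ 2 <= (x + 1) ^ 2 * (x ^ 2 * (4 * (N * x - 1) ^ 2))).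
    { rewrite Rmult_comm. apply Rmult_le_compat_l; lra. }
    nra.
Qed.

Lemma blocks_var rho M K L a (y : nat -> R) B : 0 < rho ->
  W rho M K y = 0 -> W rho M K (fun t => y t ^ 2) <= B ->
  forall eta, wsum rho M a (L * K) (fun xi => (rsum (fun j => y (Sj xi a K j)) L) ^ 2) eta <= INR L * B.
Proof.
  intros Hr Hy HB. pose proof (pM_01 rho M Hr) as Hp.
  assert (HB0 : 0 <= B) by (eapply Rle_trans; [|apply HB]; apply W_nonneg; [lra| intros; apply pow2_ge_0]).
  induction L as [|L IH]; intros eta.
  - simpl. lra.
  - replace (S L * K)%nat with (L * K + K)%nat by lia. rewrite wsum_add.
    eapply Rle_trans.
    apply (wsum_le rho M (L * K) (Rlt_le _ _ Hr) a _
      (fun xi0 => pM rho M ^ K * (rsum (fun j => y (Sj xi0 a K j)) L) ^ 2 + B)).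
    + intros xi0.
      rewrite (wsum_ext_local _ _ _ _ _ (fun xi => (rsum (fun j => y (Sj xi0 a K j)) L) ^ 2
           + (2 * rsum (fun j => y (Sj xi0 a K j)) L) * y (blocksum xi (a + Z.of_nat (L * K)) K)
           + y (blocksum xi (a + Z.of_nat (L * K)) K) ^ 2)).
      2:{ intros xi Hxi. simpl rsum.
          rewrite (rsum_ext _ (fun j => y (Sj xi0 a K j))).
          unfold Sj. ring.
          intros j Hj. unfold Sj. f_equal. apply blocksum_local. intros x Hx. apply Hxi. nia. }
      rewrite !wsum_plus, wsum_const, wsum_scal.
      rewrite (wsum_W rho M K _ y), (wsum_W rho M K _ (fun t => y t ^ 2)). rewrite Hy. lra.
    + rewrite wsum_plus, wsum_scal, wsum_const. specialize (IH eta).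
      assert (0 <= pM rho M ^ K <= 1) by (split; [apply pow_le; lra| apply pow_le1; lra]).
      assert (0 <= pM rho M ^ (L * K) <= 1) by (split; [apply pow_le; lra| apply pow_le1; lra]).
      assert (0 <= wsum rho M a (L * K) (fun xi => rsum (fun j => y (Sj xi a K j)) L ^ 2) eta)
        by (apply wsum_nonneg; [lra| intros; apply pow2_ge_0]).
      rewrite S_INR. nra.
Qed.

Definition Cfin rho := 6 * Bpsi rho + 12 * Cg rho ^ 2 * E2c rho.

Lemma rsum_decomp (f y : nat -> R) (s : nat -> nat) g c L :
  (forall t, f t = y t + c + g * INR t) ->
  rsum (fun j => f (s j)) L = rsum (fun j => y (s j)) L + INR L * c + g * rsum (fun j => INR (s j)) L.
Proof. intros H. induction L; simpl rsum. simpl; ring. rewrite IHL, H, S_INR. ring. Qed.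

Lemma main_M rho M K L a : 0 < rho -> (1 <= K)%nat -> (1 <= L)%nat ->
  exists c, box_exp rho M a (L * K) (fun eta => (V2 rho a K L eta - c) ^ 2) <= Cfin rho * INR L.
Proof.
  intros Hr HK HL. pose proof (pM_01 rho M Hr) as Hp.
  set (n' := (L * K)%nat).
  assert (Hn' : (1 <= n')%nat) by (unfold n'; nia).
  set (pK := pM rho M ^ K).
  assert (HpK : 0 < pK) by (apply pow_lt; lra).
  set (cK := W rho M K (psi rho M K) / pK).
  set (y := fun t => psi rho M K t - cK).
  assert (Hy : W rho M K y = 0).
  { unfold y. rewrite (W_ext _ _ _ (fun t => psi rho M K t - cK) (fun t => psi rho M K t + - cK)) by (intros; ring).
    rewrite (W_plus rho M K (psi rho M K) (fun _ => - cK)). rewrite W_const. fold pK.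
    unfold cK. field. lra. }
  assert (Hy2 : W rho M K (fun t => y t ^ 2) <= Bpsi rho).
  { eapply Rle_trans; [|apply (psi_var rho M K Hr HK)].
    rewrite (W_ext _ _ _ (fun t => (psi rho M K t - en rho M K) ^ 2)
       (fun t => y t ^ 2 + (2 * (cK - en rho M K) * y t + (cK - en rho M K) ^ 2))) by (intros; unfold y; ring).
    rewrite W_plus, W_plus, W_scal, Hy, W_const.
    assert (0 <= (cK - en rho M K) ^ 2 * pK) by (apply Rmult_le_pos; [apply pow2_ge_0| lra]). fold pK. lra. }
  set (dl := gam rho M K - gam rho M n').
  exists (INR L * cK - en rho M n' + dl * (INR n' * mu rho M)).
  unfold box_exp. eapply Rle_trans.
  apply (wsum_le rho M n' (Rlt_le _ _ Hr) a _ (fun eta =>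
     3 * (rsum (fun j => y (Sj eta a K j)) L) ^ 2
     + (3 * (psi rho M n' (blocksum eta a n') - en rho M n') ^ 2
     + 3 * dl ^ 2 * (INR (blocksum eta a n') - INR n' * mu rho M) ^ 2))).
  - intros eta. rewrite V2_eq by auto. fold n'.
    rewrite (rsum_decomp (fn K) y (fun j => Sj eta a K j) (gam rho M K) cK L)
      by (intros; unfold y, psi; ring).
    rewrite <- blocksum_blocks. fold n'.
    set (A := rsum (fun j => y (Sj eta a K j)) L).
    set (Bz := psi rho M n' (blocksum eta a n') - en rho M n').
    set (D := INR (blocksum eta a n') - INR n' * mu rho M).
    replace (A + INR L * cK + gam rho M K * INR (blocksum eta a n') - fn n' (blocksum eta a n')
       - (INR L * cK - en rho M n' + dl * (INR n' * mu rho M))) with (A - Bz + dl * D)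
      by (unfold Bz, D, dl, psi; ring).
    pose proof (pow2_ge_0 (A + Bz)). pose proof (pow2_ge_0 (A - dl * D)). pose proof (pow2_ge_0 (Bz + dl * D)).
    nra.
  - rewrite wsum_plus, wsum_plus, wsum_scal, wsum_scal, wsum_scal.
    rewrite (wsum_W rho M n' a (fun t => (psi rho M n' t - en rho M n') ^ 2)).
    rewrite (wsum_W rho M n' a (fun t => (INR t - INR n' * mu rho M) ^ 2)). fold (AA rho M n' 2).
    pose proof (blocks_var rho M K L a y (Bpsi rho) Hr Hy Hy2 zero_conf) as HV. fold n' in HV.
    pose proof (psi_var rho M n' Hr Hn') as HZ.
    pose proof (AA2_bounds rho M n' Hr) as HA.
    assert (HK1 : 1 <= INR K) by (apply (le_INR 1); auto).
    assert (HL1 : 1 <= INR L) by (apply (le_INR 1); auto).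
    assert (Hn'R : INR n' = INR L * INR K) by (unfold n'; apply mult_INR).
    assert (Hdl : dl ^ 2 <= 4 * Cg rho ^ 2 / INR K ^ 2).
    { pose proof (gam_close rho M K Hr HK). pose proof (gam_close rho M n' Hr Hn').
      assert (Hc : 0 <= Cg rho) by (unfold Cg; apply Rmult_le_pos; [lra|apply pow2_ge_0]).
      assert (Cg rho / INR n' <= Cg rho / INR K).
      { unfold Rdiv. apply Rmult_le_compat_l; auto. apply Rinv_le_contravar; nra. }
      assert (Rabs dl <= 2 * Cg rho / INR K).
      { unfold dl. replace (gam rho M K - gam rho M n') with
          ((gam rho M K - 1 / (1 + mu rho M) ^ 2) - (gam rho M n' - 1 / (1 + mu rho M) ^ 2)) by ring.
        eapply Rle_trans. apply Rabs_triang. rewrite Rabs_Ropp. unfold Rdiv in *. lra. }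
      replace (dl ^ 2) with (Rabs dl ^ 2) by (unfold Rabs; destruct (Rcase_abs dl); ring).
      replace (4 * Cg rho ^ 2 / INR K ^ 2) with ((2 * Cg rho / INR K) ^ 2) by (field; lra).
      apply pow_incr. split; [apply Rabs_pos| auto]. }
    assert (HE : 0 <= E2c rho) by (apply (E_nonneg rho Hr)).
    assert (H3 : 3 * dl ^ 2 * AA rho M n' 2 <= 12 * Cg rho ^ 2 * E2c rho * INR L).
    { apply Rle_trans with (3 * (4 * Cg rho ^ 2 / INR K ^ 2) * (INR n' * E2c rho)).
      apply Rmult_le_compat. apply Rmult_le_pos; [lra|apply pow2_ge_0]. lra. nra. lra.
      rewrite Hn'R. replace (3 * (4 * Cg rho ^ 2 / INR K ^ 2) * (INR L * INR K * E2c rho))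
        with (12 * Cg rho ^ 2 * E2c rho * INR L * (1 / INR K)) by (field; lra).
      assert (0 <= 12 * Cg rho ^ 2 * E2c rho * INR L) by (apply Rmult_le_pos; [|lra]; apply Rmult_le_pos; [|auto]; apply Rmult_le_pos; [lra|apply pow2_ge_0]).
      assert (1 / INR K <= 1) by (unfold Rdiv; rewrite Rmult_1_l; rewrite <- Rinv_1; apply Rinv_le_contravar; lra).
      nra. }
    unfold Cfin. assert (0 <= Bpsi rho).
    { eapply Rle_trans; [|apply HZ]. apply W_nonneg; [lra|intros; apply pow2_ge_0]. }
    nra.
Qed.

Lemma abs_inv x b : Rabs x <= b -> - b <= x <= b.
Proof. intros H. pose proof (Rle_abs x). pose proof (Rle_abs (- x)). rewrite Rabs_Ropp in H1. lra. Qed.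

Lemma pM_closed rho N : 0 < rho -> pM rho N = 1 - qq rho ^ S N.
Proof.
  intros H. destruct (qq_bounds rho H) as [[Hq0 Hq1] [Hc _]]. unfold pM.
  rewrite (sum_eq _ (fun k => qq rho ^ k * cc rho)) by (intros; unfold geom, qq, cc; ring).
  rewrite <- scal_sum, tech3 by lra. rewrite <- Hc. field. lra.
Qed.

Lemma pM_cv rho : 0 < rho -> Un_cv (pM rho) 1.
Proof.
  intros H eps He. destruct (qq_bounds rho H) as [[Hq0 Hq1] _].
  destruct (pow_lt_1_zero (qq rho) ltac:(rewrite Rabs_right; lra) eps He) as [N0 HN0].
  exists N0. intros n Hn. unfold Rdist. rewrite pM_closed by auto.
  replace (1 - qq rho ^ S n - 1) with (- qq rho ^ S n) by ring. rewrite Rabs_Ropp. apply HN0. lia.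
Qed.

Lemma pow_cv (u : nat -> R) l k : Un_cv u l -> Un_cv (fun N => u N ^ k) (l ^ k).
Proof.
  intros H. induction k. simpl. intros e He. exists 0%nat. intros. unfold Rdist. rewrite Rminus_diag, Rabs_R0. lra.
  simpl. apply CV_mult; auto.
Qed.

Lemma wsum_mono_le rho N M n a F eta : 0 < rho -> (N <= M)%nat -> (forall xi, 0 <= F xi) ->
  wsum rho N a n F eta <= wsum rho M a n F eta.
Proof.
  intros Hr HNM HF. induction HNM. lra. eapply Rle_trans; [apply IHHNM|]. apply wsum_mono_N; auto. lra.
Qed.

Lemma rsum_fn_bounds K L (s : nat -> nat) : (1 <= K)%nat ->
  0 <= rsum (fun j => fn K (s j)) L <= INR L * INR K.
Proof.
  intros HK. induction L; simpl rsum. simpl; lra. pose proof (fn_bounds K (s L) HK). rewrite S_INR. lra.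
Qed.

Lemma V2_bound rho a K L eta : 0 < rho -> (1 <= K)%nat -> (1 <= L)%nat ->
  Rabs (V2 rho a K L eta) <= INR (L * K).
Proof.
  intros Hr HK HL. rewrite V2_eq by auto.
  pose proof (rsum_fn_bounds K L (fun j => Sj eta a K j) HK).
  pose proof (fn_bounds (L * K) (blocksum eta a (L * K)) ltac:(nia)). rewrite mult_INR in *.
  apply Rabs_le. lra.
Qed.

Theorem mainTheorem11 (rho : R) (Hrho : 0 < rho) :
  exists C : R,
    forall (K L : nat) (a : Z), (0 < K)%nat -> (0 < L)%nat ->
      exists m : R,
        Un_cv (fun N => box_exp rho N a (L * K) (V2 rho a K L)) m /\
        (forall N : nat,
           box_exp rho N a (L * K) (fun eta => (V2 rho a K L eta - m) ^ 2) <= C * INR L).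
Proof.
  exists (Cfin rho). intros K L a HK HL.
  set (n := (L * K)%nat). set (B0 := INR n).
  set (V := V2 rho a K L).
  assert (HVb : forall eta, Rabs (V eta) <= B0) by (intros; apply V2_bound; auto).
  assert (HP : Un_cv (fun N => pM rho N ^ n) 1).
  { replace 1 with (1 ^ n) by apply pow1. apply pow_cv. apply pM_cv; auto. }
  set (U := fun N => box_exp rho N a n (fun eta => V eta + B0)).
  assert (HUg : Un_growing U).
  { intros N. unfold U, box_exp. apply wsum_mono_N. lra. intros xi. specialize (HVb xi). apply abs_inv in HVb. lra. }
  assert (HUb : has_ub U).
  { exists (2 * B0). intros x [i ->]. unfold U, box_exp.
    eapply Rle_trans. apply (wsum_le rho i n (Rlt_le _ _ Hrho) a _ (fun _ => 2 * B0)).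
    intros xi. specialize (HVb xi). apply abs_inv in HVb. lra.
    rewrite wsum_const. pose proof (pM_01 rho i Hrho).
    assert (0 <= pM rho i ^ n <= 1) by (split; [apply pow_le; lra| apply pow_le1; lra]).
    assert (0 <= B0) by (unfold B0; apply pos_INR). nra. }
  destruct (growing_cv U HUg HUb) as [l Hl].
  assert (HX : Un_cv (fun N => box_exp rho N a n V) (l - B0 * 1)).
  { eapply (Un_cv_ext (fun N => U N - B0 * pM rho N ^ n)).
    2:{ apply CV_minus. auto. apply CV_mult. intros e He; exists 0%nat; intros; unfold Rdist; rewrite Rminus_diag, Rabs_R0; lra. auto. }
    intros N. unfold U, box_exp. rewrite wsum_plus, wsum_const. ring. }
  set (m := l - B0 * 1) in *.
  exists m. split. exact HX.
  intros N. unfold box_exp.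
  set (Cc := Cfin rho * INR L).
  set (g := fun M => (box_exp rho M a n V - m * pM rho M ^ n) ^ 2).
  assert (Hg : Un_cv g 0).
  { replace 0 with ((m - m * 1) * (m - m * 1)) by ring. unfold g.
    eapply Un_cv_ext. 2:{ apply CV_mult; apply CV_minus; [exact HX| apply CV_mult; [|exact HP]| exact HX| apply CV_mult; [|exact HP]];
       intros e He; exists 0%nat; intros; unfold Rdist; rewrite Rminus_diag, Rabs_R0; lra. }
    intros; simpl; ring. }
  assert (Hcc : 0 < cc rho ^ n) by (apply pow_lt; apply cc_pos; auto).
  assert (Key : forall M, (N <= M)%nat ->
     wsum rho N a n (fun eta => (V eta - m) ^ 2) zero_conf <= Cc + g M / cc rho ^ n).
  { intros M HM. eapply Rle_trans. apply (wsum_mono_le rho N M); auto. intros; apply pow2_ge_0.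
    destruct (main_M rho M K L a Hrho HK HL) as [c Hc]. fold V n Cc in Hc. unfold box_exp in Hc.
    set (X2 := wsum rho M a n (fun eta => V eta ^ 2) zero_conf).
    set (X := wsum rho M a n V zero_conf).
    set (P := pM rho M ^ n).
    assert (Hq : forall c', wsum rho M a n (fun eta => (V eta - c') ^ 2) zero_conf = X2 - 2 * c' * X + c' ^ 2 * P).
    { intros c'. rewrite (wsum_ext _ _ _ _ _ (fun eta => V eta ^ 2 + ((-2 * c') * V eta + c' ^ 2))) by (intros; ring).
      rewrite wsum_plus, wsum_plus, wsum_scal, wsum_const. unfold X2, X, P. ring. }
    rewrite Hq. rewrite Hq in Hc.
    assert (HPc : cc rho ^ n <= P).
    { unfold P. apply pow_incr. split. left; apply cc_pos; auto. apply pM_pos; auto. }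
    assert (Hg' : g M = (X - m * P) ^ 2) by reflexivity.
    rewrite Hg'.
    assert ((X - m * P) ^ 2 / P <= (X - m * P) ^ 2 / cc rho ^ n).
    { unfold Rdiv. apply Rmult_le_compat_l. apply pow2_ge_0. apply Rinv_le_contravar; auto. }
    assert (X2 - 2 * m * X + m ^ 2 * P = (X2 - 2 * c * X + c ^ 2 * P) + (X - m * P) ^ 2 / P - (X - c * P) ^ 2 / P).
    { field. lra. }
    assert (0 <= (X - c * P) ^ 2 / P).
    { unfold Rdiv. apply Rmult_le_pos. apply pow2_ge_0. left; apply Rinv_0_lt_compat; lra. }
    lra. }
  destruct (Rle_lt_dec (wsum rho N a n (fun eta => (V eta - m) ^ 2) zero_conf) Cc) as [Hle|Hlt]; auto.
  exfalso. set (T := wsum rho N a n (fun eta => (V eta - m) ^ 2) zero_conf) in *.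
  destruct (Hg ((T - Cc) * cc rho ^ n)) as [M0 HM0]. apply Rmult_lt_0_compat; lra.
  specialize (HM0 (Nat.max N M0) ltac:(lia)). specialize (Key (Nat.max N M0) ltac:(lia)).
  unfold Rdist in HM0. rewrite Rminus_0_r in HM0.
  assert (Hg0 : 0 <= g (Nat.max N M0)) by (unfold g; apply pow2_ge_0).
  rewrite Rabs_right in HM0 by lra.
  assert (g (Nat.max N M0) / cc rho ^ n < T - Cc).
  { apply Rmult_lt_reg_r with (cc rho ^ n). auto. unfold Rdiv. rewrite Rmult_assoc, Rinv_l by lra. lra. }
  lra.
Qed.
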